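(* Let $K=3m$ with $m\ge 3$ and suppose $t=KM/N=K-3$. Then the D2D coded caching rate $R=N/M-1$ is achievable with subpacketization $$F=\frac{2K(K-3)(K-3/2)}{3}=9m(m-1)(2m-1).$$
   Context: D2D coded caching setting: there are $N\ge 1$ files $W_1,\dots,W_N$ and $K\ge 2$ users, each with a cache of size $M$ files, $0<M\le N$, and $t:=KM/N$ is assumed to be a positive integer. A D2D coded caching scheme with (uncoded placement and) subpacketization $F\in\mathbb{N}_+$ is defined as follows. Fix a packet size $b\ge 1$; each file is a sequence of $F$ packets $W_n=(W_n^{(1)},\dots,W_n^{(F)})$, $W_n^{(j)}\in\{0,1\}^b$. Placement: each user $k\in[K]$ stores the packets $\{W_n^{(j)}:(n,j)\in Z_k\}$ for a fixed index set $Z_k\subseteq[N]\times[F]$ with $|Z_k|\le MF$ (independent of demands and file contents). Delivery: for every demand vector $\mathbf d=(d_1,\dots,d_K)\in[N]^K$, each user $k$ broadcasts to all other users $\ell_k(\mathbf d)\in\mathbb{N}$ blocks in $\{0,1\}^b$, each a deterministic function of the packets stored by user $k$; it is required that for all file contents each user $k$ can recover all $F$ packets of $W_{d_k}$ from its stored packets and the blocks sent by the other users. The rate is $R=\max_{\mathbf d}\frac{1}{F}\sum_{k=1}^K\ell_k(\mathbf d)$ (transmitted bits normalized by the file size $Fb$). The rate $R$ is achievable with subpacketization $F$ if such a scheme with rate $R$ exists for every packet size $b\ge 1$. *)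

(* Defs.v *)
From mathcomp Require Import all_boot all_order all_algebra.
Set Implicit Arguments. Unset Strict Implicit. Unset Printing Implicit Defensive.
Import Order.TTheory GRing.Theory Num.Theory.

(* Packets are bit strings in {0,1}^b, modelled as b.-tuple bool.
   A file library is W : 'I_N -> 'I_F -> b.-tuple bool  (W n j = W_{n+1}^{(j+1)}). *)
Definition library (N F b : nat) := 'I_N -> 'I_F -> b.-tuple bool.

(* The content of a cache with index set Z: packets outside Z are hidden
   (replaced by the all-zero string), so any function of [restrict Z W]
   is a function of the stored packets only. *)
Definition restrict (N F b : nat) (Z : {set 'I_N * 'I_F}) (W : library N F b)
  : library N F b :=
  fun n j => if (n, j) \in Z then W n j else [tuple of nseq b false].

Local Open Scope ring_scope.

(* Demands are d : {ffun 'I_K -> 'I_N}.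
   - Z k : placement index set of user k, with |Z k| <= M F;
   - l d k : number of b-bit blocks broadcast by user k under demand d;
   - enc d k : the blocks sent by user k, computed from its cache content;
   - dec d k : user k's decoder, using its cache content and the blocks of
     the other users (its own slot is masked by [::]). *)
Definition D2D_scheme (N K F b : nat) (M R : rat) : Prop :=
  exists (Z : 'I_K -> {set 'I_N * 'I_F})
         (l : {ffun 'I_K -> 'I_N} -> 'I_K -> nat)
         (enc : {ffun 'I_K -> 'I_N} -> 'I_K -> library N F b -> seq (b.-tuple bool))
         (dec : {ffun 'I_K -> 'I_N} -> 'I_K -> library N F b ->
                ('I_K -> seq (b.-tuple bool)) -> 'I_F -> b.-tuple bool),
    [/\ (forall k, (#|Z k|%:R : rat) <= M * F%:R),
        (forall d k W, size (enc d k W) = l d k),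
        (forall d k (W : library N F b) j,
            dec d k (restrict (Z k) W)
                (fun i => if i == k then [::] else enc d i (restrict (Z i) W)) j
            = W (d k) j)
      & R = ((\max_(d : {ffun 'I_K -> 'I_N}) \sum_(k < K) l d k)%N%:R) / F%:R].

Definition achievable_with_subpack (N K : nat) (M R : rat) (F : nat) : Prop :=
  (0 < F)%N /\ forall b : nat, (1 <= b)%N -> D2D_scheme N K F b M R.

(* Main.v *)
From HB Require Import structures.
Require Import Defs.
From mathcomp Require Import all_boot all_order all_algebra zify ring lra.
From Stdlib Require Import ClassicalEpsilon.
Import Order.TTheory GRing.Theory Num.Theory.
Set Implicit Arguments. Unset Strict Implicit. Unset Printing Implicit Defensive.

Definition xort (b : nat) (x y : b.-tuple bool) : b.-tuple bool :=
  [tuple addb (tnth x i) (tnth y i) | i < b].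
Definition zt (b : nat) : b.-tuple bool := [tuple false | i < b].
Arguments xort {b}. Arguments zt {b}.
Lemma xortA b : associative (@xort b).
Proof. by move=> x y z; apply: eq_from_tnth => i; rewrite !tnth_mktuple addbA. Qed.
Lemma xortC b : commutative (@xort b).
Proof. by move=> x y; apply: eq_from_tnth => i; rewrite !tnth_mktuple addbC. Qed.
Lemma xor0t b : left_id (@zt b) (@xort b).
Proof. by move=> x; apply: eq_from_tnth => i; rewrite !tnth_mktuple. Qed.
HB.instance Definition _ b := Monoid.isComLaw.Build (b.-tuple bool) (@zt b) (@xort b) (@xortA b) (@xortC b) (@xor0t b).
Lemma xortK b (x y : b.-tuple bool) : xort (xort x y) y = x.
Proof. by apply: eq_from_tnth => i; rewrite !tnth_mktuple -addbA addbb addbF. Qed.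

Section Generic.
Variables (N K F b : nat) (U : finType) (validU : pred U) (code : U -> 'I_F).
Hypothesis code_inj : {in validU &, injective code}.
Variable missU : 'I_K -> U -> bool.
Variable D : eqType.
Variable blist : 'I_K -> seq D.
Variable rec : 'I_K -> D -> 'I_K -> bool.
Variable pktU : 'I_K -> D -> 'I_K -> U.

Definition miss k (j : 'I_F) := [exists u, [&& validU u, code u == j & missU k u]].
Lemma miss_code k q : validU q -> miss k (code q) = missU k q.
Proof.
move=> vq; apply/existsP/idP => [[u /and3P[vu /eqP cu mu]]|mq]; last first.
  by exists q; rewrite vq eqxx.
by rewrite -(code_inj vu vq cu).
Qed.

Definition Zs k : {set 'I_N * 'I_F} := [set x | ~~ miss k x.2].
Definition blk (d : {ffun 'I_K -> 'I_N}) i β (V : library N F b) : b.-tuple bool :=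
  \big[xort/zt]_(u | rec i β u) V (d u) (code (pktU i β u)).
Definition encG d i V := [seq blk d i β V | β <- blist i].

Hypothesis Hsend : forall i β u, β \in blist i -> rec i β u ->
  validU (pktU i β u) && ~~ missU i (pktU i β u).
Hypothesis Hdeliv : forall k p, validU p -> missU k p ->
  exists i, exists2 β, β \in blist i & [/\ i != k, rec i β k, pktU i β k = p &
     forall u, u != k -> rec i β u -> ~~ missU k (pktU i β u)].

Lemma blk_restr d i β W : β \in blist i ->
  blk d i β (restrict (Zs i) W) = blk d i β W.
Proof.
move=> bi; apply: eq_bigr => u ru; rewrite /restrict inE /=.
by case/andP: (Hsend bi ru) => v nm; rewrite miss_code // nm.
Qed.

Lemma decodeG d k (W W' : library N F b) :
  restrict (Zs k) W' = restrict (Zs k) W ->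
  (forall i, i != k -> encG d i (restrict (Zs i) W') = encG d i (restrict (Zs i) W)) ->
  forall j, W' (d k) j = W (d k) j.
Proof.
move=> HZ Henc j.
have HZ' : forall n j', ~~ miss k j' -> W' n j' = W n j'.
  move=> n j' nm; move: (congr1 (fun f => f n j') HZ); rewrite /restrict inE /=.
  by rewrite nm.
case mj: (miss k j); last by rewrite HZ' ?mj.
case/existsP: mj => p /and3P[vp /eqP cp mp]; rewrite -cp.
have [i [β bi [ik rik pik oth]]] := Hdeliv vp mp.
have := Henc i ik; rewrite /encG => /eq_in_map /(_ β bi).
rewrite !blk_restr // /blk (bigD1 k) //= (bigD1 k rik) /= pik.
have -> : \big[xort/zt]_(u | rec i β u && (u != k)) W' (d u) (code (pktU i β u)) =
          \big[xort/zt]_(u | rec i β u && (u != k)) W (d u) (code (pktU i β u)).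
  apply: eq_bigr => u /andP[ru uk]; apply: HZ'.
  case/andP: (Hsend bi ru) => v _; rewrite miss_code //.
  exact: oth.
by move/(congr1 (fun x => xort x (\big[xort/zt]_(u | rec i β u && (u != k)) W (d u) (code (pktU i β u))))); rewrite !xortK.
Qed.
Definition decG d k (C : library N F b) (msgs : 'I_K -> seq (b.-tuple bool)) (j : 'I_F)
  : b.-tuple bool :=
  epsilon (inhabits (fun (_ : 'I_N) (_ : 'I_F) => @zt b))
    (fun W' => restrict (Zs k) W' = C /\
       forall i, i != k -> encG d i (restrict (Zs i) W') = msgs i) (d k) j.

Lemma decG_ok d k W j :
  decG d k (restrict (Zs k) W)
    (fun i => if i == k then [::] else encG d i (restrict (Zs i) W)) j = W (d k) j.
Proof.
rewrite /decG; set P := (fun W' => _ /\ _).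
have : P (epsilon (inhabits (fun (_ : 'I_N) (_ : 'I_F) => @zt b)) P).
  by apply: epsilon_spec; exists W; split=> // i /negbTE ->.
case=> h1 h2; apply: decodeG h1 _ j => i ik; by rewrite h2 // (negbTE ik).
Qed.

Local Open Scope ring_scope.
Theorem generic_scheme (M R : rat) : (0 < N)%N ->
  (forall k, ((N * #|[set j : 'I_F | ~~ miss k j]|)%N%:R : rat) <= M * F%:R) ->
  R = ((\sum_(k < K) size (blist k))%N%:R) / F%:R ->
  D2D_scheme N K F b M R.
Proof.
move=> N0 Hc HR.
exists Zs, (fun d k => size (blist k)), encG, decG; split.
- move=> k; have -> : Zs k = setX [set: 'I_N] [set j | ~~ miss k j].
    by apply/setP => x; rewrite !inE.
  by rewrite cardsX cardsT card_ord.
- by move=> d k W; rewrite size_map.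
- by move=> d k W j; exact: decG_ok.
- rewrite HR; congr (_%:R / _).
  pose d0 : {ffun 'I_K -> 'I_N} := [ffun=> Ordinal N0].
  apply/eqP; rewrite eqn_leq; apply/andP; split.
    exact: (leq_bigmax_cond (P := predT) (F := fun d : {ffun 'I_K -> 'I_N} => \sum_(k < K) size (blist k)) d0).
  by apply/bigmax_leqP.
Qed.
End Generic.

Local Close Scope ring_scope.

Definition ordm (n k : nat) : 'I_n.+1 := Ordinal (ltn_pmod k (ltn0Sn n)).
Definition oth (r1 r2 : 'I_3) : 'I_3 := ordm 2 (6 - r1 - r2).
Definition pickR (r : 'I_3) (e : bool) : 'I_3 :=
  ordm 2 (if e then (if val r == 2 then 1 else 2) else (if val r == 0 then 1 else 0)).
Definition bigb (ri rx : 'I_3) := (oth ri rx < ri)%N.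
Ltac o3 r := case: r => [[|[|[|//]]] ?].

Lemma oth_facts (r1 r2 r : 'I_3) : r1 != r2 ->
  [&& oth r1 r2 != r1, oth r1 r2 != r2, oth r2 r1 == oth r1 r2,
      oth r1 (oth r1 r2) == r2 &  [|| r == r1, r == r2 | r == oth r1 r2]].
Proof. by o3 r1; o3 r2; o3 r; vm_compute. Qed.
Lemma pick_facts (r : 'I_3) (e : bool) : (pickR r e != r) && (bigb (pickR r e) r == e).
Proof. by o3 r; case: e; vm_compute. Qed.
Lemma s4_facts (s : 'I_4) : s = ordm 3 (2 * (2 <= s)%N + odd s).
Proof. by apply: val_inj; case: s => [[|[|[|[|//]]]] ?]. Qed.
Lemma s3_facts (s : 'I_3) : s != ord0 -> s = ordm 2 (1 + (val s == 2)).
Proof. by case: s => [[|[|[|//]]] ?] // _; apply: val_inj. Qed.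

Section Users.
Variable m : nat.
Local Notation K := (3 * m).

Lemma grp_lt (k : 'I_K) : (k %/ 3 < m)%N. Proof. by rewrite ltn_divLR // [(m * 3)%N]mulnC. Qed.
Definition grp (k : 'I_K) : 'I_m := Ordinal (grp_lt k).
Definition mb (k : 'I_K) : 'I_3 := ordm 2 k.
Lemma usr_lt (g : 'I_m) (r : 'I_3) : (3 * g + r < K)%N.
Proof. have := ltn_ord g; have := ltn_ord r; lia. Qed.
Definition usr (g : 'I_m) (r : 'I_3) : 'I_K := Ordinal (usr_lt g r).

Lemma grp_usr g r : grp (usr g r) = g.
Proof. apply: val_inj => /=; have := ltn_ord r; lia. Qed.
Lemma mb_usr g r : mb (usr g r) = r.
Proof. apply: val_inj => /=; have := ltn_ord r; lia. Qed.
Lemma usrK k : usr (grp k) (mb k) = k.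
Proof. apply: val_inj => /=; lia. Qed.
Lemma user_eqE (k k' : 'I_K) : (k == k') = (grp k == grp k') && (mb k == mb k').
Proof.
apply/eqP/andP => [->|[/eqP a /eqP b]]; first by rewrite !eqxx.
by rewrite -(usrK k) -(usrK k') a b.
Qed.

Definition third (a c : 'I_K) := usr (grp a) (oth (mb a) (mb c)).

Lemma third_facts a c : grp a = grp c -> a != c ->
  [/\ grp (third a c) = grp a, third a c != a, third a c != c,
      third c a = third a c /\ third (third a c) a = c &
      forall k, grp k = grp a -> [|| k == a, k == c | k == third a c]].
Proof.
move=> gac; rewrite user_eqE gac eqxx /= => mac.
have H := oth_facts (mb a) mac.
case/and5P: H => o1 o2 /eqP o3 /eqP o4 _.
rewrite /third; split.
- by rewrite grp_usr.
- by rewrite user_eqE grp_usr mb_usr eqxx.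
- by rewrite user_eqE grp_usr mb_usr gac eqxx.
- split; first by rewrite o3 gac.
  rewrite grp_usr mb_usr.
  have := oth_facts (mb a) o1; case/and5P => _ _ /eqP <- _ _.
  by rewrite o4 gac usrK.
- move=> k gk; rewrite !user_eqE gk gac eqxx /= -gac.
  by have := oth_facts (mb k) mac; case/and5P => _ _ _ _; rewrite grp_usr mb_usr eqxx.
Qed.
Lemma mates a c : grp a = grp c -> a != c -> forall k,
  ((grp k == grp a) && (k != a)) = (k == c) || (k == third a c).
Proof.
move=> gac ac k; have [g3 t1 t2 _ H] := third_facts gac ac.
apply/idP/idP.
- case/andP => /eqP gk ka; case/or3P: (H k gk) => [/eqP kae|->|->] //; last by rewrite orbT.
  by rewrite kae eqxx in ka.
- case/orP => /eqP ->; first by rewrite gac eqxx eq_sym ac.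
  by rewrite g3 eqxx t1.
Qed.

Definition UA := ('I_K * 'I_K * 'I_3)%type.
Definition UB := ({set 'I_m} * {ffun 'I_m -> 'I_3} * 'I_4)%type.
Definition U := (UA + UB)%type.

Definition validU (u : U) : bool :=
  match u with
  | inl a => grp a.1.1 != grp a.1.2
  | inr a => (#|a.1.1| == 3) && (a.1.2 \in pffun_on ord0 a.1.1 predT)
  end.
Definition missU (k : 'I_K) (u : U) : bool :=
  match u with
  | inl a => ((grp k == grp a.1.1) && (k != a.1.1)) || (k == a.1.2)
  | inr a => (grp k \in a.1.1) && (a.1.2 (grp k) == mb k)
  end.

Definition Dsc := ('I_3 + ('I_K * 'I_K))%type.
Definition cross (i x y : 'I_K) := [&& grp x == grp i, x != i & grp y != grp i].
Definition blist (i : 'I_K) : seq Dsc :=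
  [seq inl s | s <- enum 'I_3] ++
  [seq inr xy | xy <- enum [pred xy : 'I_K * 'I_K | cross i xy.1 xy.2]].
Definition rec (i : 'I_K) (b : Dsc) (u : 'I_K) : bool :=
  match b with
  | inl _ => grp u != grp i
  | inr xy => [&& u != xy.1, u != xy.2 & u != i]
  end.
Definition mkB (u x y : 'I_K) : {set 'I_m} * {ffun 'I_m -> 'I_3} :=
  ([set grp u; grp x; grp y],
   [ffun g => if g == grp u then mb u else if g == grp x then mb x
              else if g == grp y then mb y else ord0]).
Definition pktU (i : 'I_K) (b : Dsc) (u : 'I_K) : U :=
  match b with
  | inl s => inl (i, u, s)
  | inr xy =>
    if grp u == grp xy.1 then inl (i, xy.2, ord0)
    else if grp u == grp xy.2 then
      inl (third u xy.2, xy.1, ordm 2 (1 + bigb (mb i) (mb xy.1)))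
    else inr (mkB u xy.1 xy.2, ordm 3 (2 * (grp xy.1 < grp xy.2)%N + bigb (mb i) (mb xy.1)))
  end.

Lemma mem_blist_inr i x y : (inr (x, y) \in blist i) = cross i x y.
Proof.
rewrite mem_cat; apply/orP/idP => [[/mapP[? _ //]|/mapP[[x' y'] + [-> ->]]]|c].
  by rewrite mem_enum.
by right; apply/mapP; exists (x, y); rewrite // mem_enum.
Qed.
Lemma mem_blist_inl i s : inl s \in blist i.
Proof. by rewrite mem_cat; apply/orP; left; apply/mapP; exists s; rewrite ?mem_enum. Qed.

Lemma card_mkB u x y : grp u != grp x -> grp u != grp y -> grp x != grp y ->
  #|(mkB u x y).1| = 3.
Proof.
move=> ux uy xy; rewrite /mkB /=.
have -> : [set grp u; grp x; grp y] = grp u |: [set grp x; grp y].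
  by apply/setP => g; rewrite !inE orbA.
by rewrite cardsU1 cards2 !inE xy negb_or ux uy.
Qed.

Lemma valid_mkB u x y s : grp u != grp x -> grp u != grp y -> grp x != grp y ->
  validU (inr (mkB u x y, s)).
Proof.
move=> ux uy xy; rewrite /validU card_mkB // eqxx /=.
apply/pffun_onP; split=> [|g _]; last by [].
apply/subsetP => g; rewrite !inE ffunE.
by case: (g == grp u) => //; case: (g == grp x) => //; case: (g == grp y); rewrite ?eqxx.
Qed.

Lemma miss_mkB k u x y s : grp u != grp x -> grp u != grp y -> grp x != grp y ->
  missU k (inr (mkB u x y, s)) = [|| k == u, k == x | k == y].
Proof.
move=> ux uy xy; rewrite /missU /mkB /= !inE ffunE !user_eqE.
case: (eqVneq (grp k) (grp u)) => [->|ku] /=.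
  by rewrite (negbTE ux) (negbTE uy) /= orbF eq_sym.
case: (eqVneq (grp k) (grp x)) => [->|kx] /=.
  by rewrite (negbTE xy) /= orbF eq_sym.
by case: (grp k == grp y) => //=; rewrite eq_sym.
Qed.
Lemma pkt_cross i x y u : cross i x y -> [&& u != x, u != y & u != i] ->
  validU (pktU i (inr (x, y)) u) /\
  forall k, missU k (pktU i (inr (x, y)) u) = [|| k == u, k == x | k == y].
Proof.
case/and3P => /eqP gxi xi yi /and3P[ux uy ui]; rewrite /pktU /=.
case: ifP => [/eqP gux|/negbT gux].
  split; first by rewrite /validU /= eq_sym.
  move=> k; rewrite /missU /= (mates (esym gxi) (contra_neq esym xi) k).
  have [_ _ _ _ H] := third_facts (esym gxi) (contra_neq esym xi).
  have /or3P[/eqP ue|/eqP ue|/eqP ue] := H u (etrans gux gxi).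
  - by rewrite ue eqxx in ui.
  - by rewrite ue eqxx in ux.
  by rewrite -ue; case: (k == u); case: (k == x); case: (k == y).
case: ifP => [/eqP guy|/negbT guy].
  have uy' : u != y by [].
  have [g3 t1 t2 [_ tt] _] := third_facts guy uy'.
  split; first by rewrite /validU /= g3.
  move=> k; rewrite /missU /= (mates g3 t1 k) tt.
  by case: (k == u); case: (k == x); case: (k == y).
have xy : grp x != grp y by rewrite gxi eq_sym.
by split; [apply: valid_mkB | move=> k; apply: miss_mkB].
Qed.
Lemma Hsend i b u : b \in blist i -> rec i b u ->
  validU (pktU i b u) && ~~ missU i (pktU i b u).
Proof.
case: b => [s|[x y]] bi /=.
  move=> ui; rewrite /validU /missU /= eq_sym ui !eqxx /=.
  by apply: contra ui => /eqP ->.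
move=> r; rewrite mem_blist_inr in bi.
have [-> ->] := pkt_cross bi r; case/and3P: bi => _ xi yi; case/and3P: r => _ _ ui.
rewrite /= ![i == _]eq_sym (negbTE ui) (negbTE xi) /=; apply: contra yi => /eqP ->; exact: eqxx.
Qed.

Lemma mkB_eq G f k x y : validU (inr (G, f, ord0)) ->
  grp k != grp x -> grp k != grp y -> grp x != grp y ->
  grp k \in G -> grp x \in G -> grp y \in G ->
  f (grp k) = mb k -> f (grp x) = mb x -> f (grp y) = mb y -> mkB k x y = (G, f).
Proof.
case/andP => /eqP cG /pffun_onP[supp _] kx ky xy kG xG yG fk fx fy.
have eqS : [set grp k; grp x; grp y] = G.
  apply/eqP; rewrite eqEcard; apply/andP; split.
    by apply/subsetP => g; rewrite !inE -orbA; case/or3P => /eqP ->.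
  by rewrite cG (card_mkB kx ky xy).
rewrite /mkB eqS; congr pair; apply/ffunP => g; rewrite ffunE.
case: ifP => [/eqP ->//|gk]; case: ifP => [/eqP ->//|gx]; case: ifP => [/eqP ->//|gy].
have ngG : g \notin G by rewrite -eqS !inE gk gx gy.
case: (eqVneq (f g) ord0) => // fg; exfalso; move/negP: ngG; apply.
by apply: (subsetP supp); rewrite inE.
Qed.
Lemma others i x y k : cross i x y -> rec i (inr (x, y)) k ->
  forall u, u != k -> rec i (inr (x, y)) u -> ~~ missU k (pktU i (inr (x, y)) u).
Proof.
move=> c /and3P[kx ky _] u uk ru; have [_ ->] := pkt_cross c ru.
by rewrite eq_sym (negbTE uk) (negbTE kx) (negbTE ky).
Qed.

Lemma delivB k x y (e : bool) : grp k != grp x -> grp k != grp y -> grp x != grp y ->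
  let i := usr (grp x) (pickR (mb x) e) in
  [/\ inr (x, y) \in blist i, i != k, rec i (inr (x, y)) k,
      pktU i (inr (x, y)) k = inr (mkB k x y, ordm 3 (2 * (grp x < grp y)%N + e)) &
      forall u, u != k -> rec i (inr (x, y)) u -> ~~ missU k (pktU i (inr (x, y)) u)].
Proof.
move=> kx ky xy i.
have gi : grp i = grp x by rewrite grp_usr.
have /andP[pk /eqP pb] := pick_facts (mb x) e.
have xi : x != i by rewrite user_eqE gi eqxx mb_usr eq_sym.
have c : cross i x y by rewrite /cross gi eqxx xi eq_sym xy.
have ik : i != k by rewrite user_eqE gi eq_sym (negbTE kx).
have kx' : k != x by apply: contra kx => /eqP ->.
have ky' : k != y by apply: contra ky => /eqP ->.
have r : rec i (inr (x, y)) k by rewrite /rec /= kx' ky' eq_sym ik.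
split => //; first by rewrite mem_blist_inr.
- rewrite /pktU /= (negbTE kx) (negbTE ky) /i mb_usr pb.
  by [].
- exact: others.
Qed.
Lemma Hdeliv k p : validU p -> missU k p ->
  exists i, exists2 b, b \in blist i & [/\ i != k, rec i b k, pktU i b k = p &
     forall u, u != k -> rec i b u -> ~~ missU k (pktU i b u)].
Proof.
case: p => [[[z v] s] | [[G f] s]] /= vp mp.
  rewrite /validU /= in vp; rewrite /missU /= in mp.
  case: (eqVneq k v) => [kv | kv].
    subst k; exists z; exists (inl s); first exact: mem_blist_inl.
    split => //.
    - by apply: contra vp => /eqP ->.
    - by rewrite /rec eq_sym.
    by move=> u uv gu; rewrite /pktU /missU /= [grp v == _]eq_sym (negbTE vp) /= [v == _]eq_sym.
  rewrite (negbTE kv) orbF in mp; case/andP: mp => /eqP gkz kz.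
  have zk : z != k by rewrite eq_sym.
  have [g3 t1 t2 _ H] := third_facts (esym gkz) zk.
  set x := third z k in g3 t1 t2 H.
  have gvz : grp v != grp z by rewrite eq_sym.
  case: (eqVneq s ord0) => [s0|sn0].
    have c : cross z x v by rewrite /cross g3 eqxx t1 gvz.
    have r : rec z (inr (x, v)) k by rewrite /rec /= eq_sym t2 kv kz.
    exists z; exists (inr (x, v)); first by rewrite mem_blist_inr.
    split => //; last exact: others.
    by rewrite /pktU /= g3 gkz eqxx s0.
  pose e := (val s == 2); pose i := usr (grp v) (pickR (mb v) e).
  have gxv : grp k != grp v by rewrite gkz.
  have gx : grp x = grp k by rewrite g3.
  have /andP[pkn /eqP pb] := pick_facts (mb v) e.
  have gi : grp i = grp v by rewrite grp_usr.
  have vi : v != i by rewrite user_eqE gi eqxx mb_usr eq_sym.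
  have c : cross i v x by rewrite /cross gi eqxx vi gx gkz.
  have ik : i != k by rewrite user_eqE gi eq_sym (negbTE gxv).
  have r : rec i (inr (v, x)) k.
    by rewrite /rec /= kv eq_sym t2 eq_sym ik.
  exists i; exists (inr (v, x)); first by rewrite mem_blist_inr.
  split => //; last exact: others.
  have kx : k != x by rewrite eq_sym.
  have [gt tk tx _ _] := third_facts (esym gx) kx.
  have tz : third k x = z.
    have := H (third k x); rewrite gt gkz => /(_ erefl) /or3P[/eqP //|/eqP e1|/eqP e1].
      by rewrite e1 eqxx in tk.
    by rewrite e1 eqxx in tx.
  rewrite /pktU /= (negbTE gxv) gx eqxx tz /i mb_usr pb.
  by rewrite -s3_facts.
rewrite /missU /= in mp; case/andP: mp => kG /eqP fk.
have fin : forall x y, grp k != grp x -> grp k != grp y -> grp x != grp y ->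
    grp x \in G -> grp y \in G -> f (grp x) = mb x -> f (grp y) = mb y ->
    (grp x < grp y)%N = (2 <= s)%N ->
  exists i, exists2 b, b \in blist i & [/\ i != k, rec i b k, pktU i b k = inr (G, f, s) &
     forall u, u != k -> rec i b u -> ~~ missU k (pktU i b u)].
  move=> x y kx ky xy xG yG fx fy hs.
  have [bi ik r pk oth] := delivB (odd s) kx ky xy.
  exists (usr (grp x) (pickR (mb x) (odd s))); exists (inr (x, y)) => //; split => //.
  rewrite pk (mkB_eq (f := f) (G := G) _ kx ky xy) // hs -s4_facts //.
have c2 : #|G :\ grp k| == 2.
  case/andP: vp => /eqP c3 _; have := cardsD1 (grp k) G; rewrite c3 kG /=; by case; rewrite add0n => <-.
case/cards2P: c2 => g1 [g2 [g12 eq12]].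
have g1G : g1 \in G :\ grp k by rewrite eq12 !inE eqxx.
have g2G : g2 \in G :\ grp k by rewrite eq12 !inE eqxx orbT.
rewrite !inE in g1G g2G; case/andP: g1G => g1k g1G; case/andP: g2G => g2k g2G.
set X := usr g1 (f g1); set Y := usr g2 (f g2).
have gX : grp X = g1 by rewrite grp_usr.
have gY : grp Y = g2 by rewrite grp_usr.
have mX : mb X = f g1 by rewrite mb_usr.
have mY : mb Y = f g2 by rewrite mb_usr.
have kg1 : grp k != g1 by rewrite eq_sym.
have kg2 : grp k != g2 by rewrite eq_sym.
have g21 : g2 != g1 by rewrite eq_sym.
case: (ltngtP g1 g2) => [l|l|e].
- case hs: (2 <= s)%N.
    by apply: (fin X Y); rewrite ?gX ?gY ?mX ?mY // l hs.
  by apply: (fin Y X); rewrite ?gX ?gY ?mX ?mY // hs ltnNge ltnW.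
- case hs: (2 <= s)%N.
    by apply: (fin Y X); rewrite ?gX ?gY ?mX ?mY // l hs.
  by apply: (fin X Y); rewrite ?gX ?gY ?mX ?mY // hs ltnNge ltnW.
- by move/val_inj: e => e; rewrite e eqxx in g12.
Qed.

Lemma cardE_sum (T : finType) (P : pred T) : #|[set u | P u]| = \sum_u (P u : nat).
Proof. by rewrite -sum1_card big_mkcond; apply: eq_bigr => u _; rewrite inE; case: (P u). Qed.

Lemma sum_pair (T1 T2 : finType) (F : T1 -> T2 -> nat) :
  \sum_(p : T1 * T2) F p.1 p.2 = \sum_a \sum_b F a b.
Proof. by rewrite pair_bigA. Qed.

Lemma cnt_grp g : #|[set v : 'I_K | grp v == g]| = 3.
Proof.
have inj : injective (usr g) by move=> r1 r2 e; rewrite -(mb_usr g r1) e mb_usr.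
suff -> : [set v : 'I_K | grp v == g] = usr g @: [set: 'I_3].
  by rewrite card_imset // cardsT card_ord.
apply/setP => v; rewrite !inE; apply/eqP/imsetP => [<-|[r _ ->]]; last by rewrite grp_usr.
by exists (mb v); rewrite ?inE // usrK.
Qed.

Lemma cnt_ngrp g : #|[set v : 'I_K | grp v != g]| = 3 * m - 3.
Proof.
have H := cardC [set v : 'I_K | grp v == g]; rewrite cnt_grp card_ord in H.
have E : #|[set v : 'I_K | grp v != g]| = #|[predC [set v : 'I_K | grp v == g]]|.
  by apply: eq_card => v; rewrite !inE.
lia.
Qed.

Lemma cnt_mates i : #|[set x : 'I_K | (grp x == grp i) && (x != i)]| = 2.
Proof.
have H := cardD1 i [set v : 'I_K | grp v == grp i]; rewrite cnt_grp inE eqxx in H.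
have E : #|[set x : 'I_K | (grp x == grp i) && (x != i)]| =
         #|[predD1 [set v : 'I_K | grp v == grp i] & i]|.
  by apply: eq_card => v; rewrite !inE andbC.
have H1 : nat_of_bool true = 1 by []. rewrite H1 in H; lia.
Qed.

Lemma size_blist i : size (blist i) = 3 + 2 * (3 * m - 3).
Proof.
rewrite /blist size_cat !size_map -enumT size_enum_ord -cardE; congr (_ + _).
rewrite (@eq_card _ _ (setX [set x : 'I_K | (grp x == grp i) && (x != i)]
                            [set v : 'I_K | grp v != grp i])).
  by rewrite cardsX cnt_mates cnt_ngrp.
by move=> -[x y]; rewrite !inE /cross andbA.
Qed.

Lemma sum_constT (T : finType) (c : nat) : \sum_(x : T) c = #|T| * c.
Proof. by rewrite sum_nat_const. Qed.

Lemma sumA3 (c : 'I_K -> 'I_K -> nat) :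
  \sum_(a : UA) c a.1.1 a.1.2 = 3 * \sum_z \sum_v c z v.
Proof.
transitivity (\sum_(zv : 'I_K * 'I_K) \sum_(s : 'I_3) c zv.1 zv.2).
  by rewrite pair_bigA.
rewrite -sum_pair big_distrr /=; apply: eq_bigr => z _.
by rewrite sum_constT card_ord.
Qed.

Lemma cnt_validA : \sum_(a : UA) (validU (inl a) : nat) = 3 * (3 * m * (3 * m - 3)).
Proof.
rewrite (sumA3 (fun z v => (grp z != grp v : nat))); congr (_ * _).
rewrite -[X in _ = X * _]card_ord -sum_constT; apply: eq_bigr => z _.
rewrite -(cnt_ngrp (grp z)) cardE_sum; apply: eq_bigr => v _; by rewrite eq_sym.
Qed.

Lemma sumB4 (c : {set 'I_m} -> {ffun 'I_m -> 'I_3} -> nat) :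
  \sum_(b : UB) c b.1.1 b.1.2 = 4 * \sum_G \sum_f c G f.
Proof.
transitivity (\sum_(Gf : {set 'I_m} * {ffun 'I_m -> 'I_3}) \sum_(s : 'I_4) c Gf.1 Gf.2).
  by rewrite pair_bigA.
rewrite -sum_pair big_distrr /=; apply: eq_bigr => z _.
by rewrite sum_constT card_ord.
Qed.

Lemma cnt_pff (G : {set 'I_m}) : #|[set f : {ffun 'I_m -> 'I_3} | f \in pffun_on ord0 G predT]| = 3 ^ #|G|.
Proof.
rewrite (@eq_card _ _ (pffun_on ord0 G predT)); last by move=> f; rewrite inE.
rewrite card_pffun_on; congr (_ ^ _).
by rewrite (@eq_card _ _ 'I_3) ?card_ord.
Qed.

Lemma cnt_validB : \sum_(b : UB) (validU (inr b) : nat) = 4 * (27 * 'C(m, 3)).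
Proof.
rewrite (sumB4 (fun G f => ((#|G| == 3) && (f \in pffun_on ord0 G predT) : nat))).
congr (_ * _).
rewrite -[m in RHS]card_ord -card_draws cardE_sum big_distrr /=; apply: eq_bigr => G _.
case: (eqVneq #|G| 3) => [c3|c3] /=.
  by rewrite -cardE_sum cnt_pff c3 muln1.
by rewrite big1 // muln0.
Qed.

Lemma cnt_missA k : \sum_(a : UA) (validU (inl a) && missU k (inl a) : nat) =
  3 * (2 * (3 * m - 3) + (3 * m - 3)).
Proof.
rewrite (sumA3 (fun z v => ((grp z != grp v) &&
           (((grp k == grp z) && (k != z)) || (k == v)) : nat))); congr (_ * _).
transitivity (\sum_z (((grp z == grp k) && (z != k) : nat) * (3 * m - 3) + (grp z != grp k : nat))).
  apply: eq_bigr => z _.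
  case: (eqVneq (grp z) (grp k)) => [gz|gz].
    case: (eqVneq z k) => [->|zk].
      rewrite big1 // => v _; case: (eqVneq k v) => [->|] /=; by rewrite ?eqxx ?andbF.
    rewrite /= mul1n addn0 -(cnt_ngrp (grp k)) cardE_sum.
    by apply: eq_bigr => v _; rewrite andbT gz eq_sym.
  rewrite /= (eq_bigr (fun v => (v == k : nat))).
    by rewrite -cardE_sum (@eq_card _ _ [set k]) ?cards1 // => v; rewrite !inE.
  move=> v _; case: (eqVneq v k) => [->|vk]; first by rewrite andbT gz.
  by rewrite andbF.
rewrite big_split /= -big_distrl /= -!cardE_sum.
rewrite (@eq_card _ _ [set x : 'I_K | (grp x == grp k) && (x != k)]) ?cnt_mates ?cnt_ngrp //.
Qed.

Lemma cnt_fix (G : {set 'I_m}) g r : #|G| = 3 -> g \in G ->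
  #|[set f : {ffun 'I_m -> 'I_3} | (f \in pffun_on ord0 G predT) && (f g == r)]| = 9.
Proof.
move=> c3 gG.
rewrite (@eq_card _ _ (pfamily ord0 G (fun x => if x == g then pred1 r else predT))).
  rewrite card_pfamily foldrE big_map big_enum /= (bigD1 g) //= eqxx card1 mul1n.
  rewrite (eq_bigr (fun _ => 3)); last first.
    by move=> x /andP[_ /negbTE ->]; rewrite (@eq_card _ _ 'I_3) ?card_ord.
  rewrite prod_nat_const.
  have H := cardD1 g G; rewrite gG c3 in H.
  rewrite (@eq_card _ _ [predD1 G & g]); last by move=> i; rewrite !inE andbC.
  have H1 : nat_of_bool true = 1 by []. rewrite H1 in H.
  by have -> : #|[predD1 G & g]| = 2 by lia.
move=> f; rewrite inE; apply/andP/pfamilyP => [[/pffun_onP[sup _] /eqP fg]|[sup H]].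
  by split=> // x xG; case: ifP => [/eqP ->|]; rewrite ?inE ?fg.
split; first by apply/pffun_onP; split.
by have := H g gG; rewrite eqxx inE.
Qed.

Lemma cnt_G3 (g : 'I_m) : #|[set G : {set 'I_m} | (#|G| == 3) && (g \in G)]| = 'C(m.-1, 2).
Proof.
have split3 : #|[set G : {set 'I_m} | #|G| == 3]| =
   #|[set G : {set 'I_m} | (#|G| == 3) && (g \in G)]| +
   #|[set G : {set 'I_m} | (#|G| == 3) && (g \notin G)]|.
  rewrite !cardE_sum -big_split /=; apply: eq_bigr => G _.
  by case: (#|G| == 3); case: (g \in G).
have nG : #|[set G : {set 'I_m} | (#|G| == 3) && (g \notin G)]| = 'C(m.-1, 3).
  rewrite (@eq_card _ _ [set A : {set 'I_m} | A \subset [set~ g] & #|A| == 3]).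
    by rewrite cards_draws cardsC1 card_ord.
  by move=> A; rewrite !inE subsetC sub1set inE andbC.
rewrite card_draws card_ord nG in split3.
have m0 : (0 < m)%N := leq_ltn_trans (leq0n _) (ltn_ord g).
have Cb : 'C(m, 3) = 'C(m.-1, 3) + 'C(m.-1, 2) by rewrite -binS prednK.
lia.
Qed.

Lemma cnt_missB k : \sum_(b : UB) (validU (inr b) && missU k (inr b) : nat) =
  4 * (9 * 'C(m.-1, 2)).
Proof.
rewrite (sumB4 (fun G f => (((#|G| == 3) && (f \in pffun_on ord0 G predT)) &&
          ((grp k \in G) && (f (grp k) == mb k)) : nat))); congr (_ * _).
rewrite -(cnt_G3 (grp k)) cardE_sum big_distrr /=; apply: eq_bigr => G _.
case: (eqVneq #|G| 3) => [c3|c3] /=; last by rewrite big1 // muln0.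
case gG: (grp k \in G) => /=; last by rewrite big1 // => f _; rewrite andbF.
rewrite muln1 -(cnt_fix (mb k) c3 gG) cardE_sum; apply: eq_bigr => f _.
by [].
Qed.
End Users.

Section Final.
Variable m : nat.
Local Notation K := (3 * m).

Lemma card_splitU (P : pred (U m)) :
  #|[set u | P u]| = \sum_a (P (inl a) : nat) + \sum_b (P (inr b) : nat).
Proof. by rewrite cardE_sum big_sumType. Qed.

Lemma cnt_valid : #|[set u : U m | validU u]| = 3 * (3 * m * (3 * m - 3)) + 4 * (27 * 'C(m, 3)).
Proof. by rewrite card_splitU cnt_validA cnt_validB. Qed.

Lemma cnt_miss k : #|[set u : U m | validU u && missU k u]| =
  3 * (2 * (3 * m - 3) + (3 * m - 3)) + 4 * (9 * 'C(m.-1, 2)).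
Proof. by rewrite card_splitU (cnt_missA k) (cnt_missB k). Qed.

Definition codeU (F : nat) (j0 : 'I_F) (u : U m) : 'I_F :=
  insubd j0 (index u (enum [set u | validU u])).

Lemma codeU_inj F (j0 : 'I_F) : #|[set u : U m | validU u]| <= F ->
  {in @validU m &, injective (codeU j0)}.
Proof.
move=> le u v vu vv; rewrite /codeU => /(congr1 val); rewrite !val_insubd.
set s := enum _.
have ix : forall x, validU x -> index x s < F.
  move=> x vx; apply: leq_trans le; rewrite cardE index_mem mem_enum inE //.
rewrite !ix // => e.
have mu : u \in s by rewrite mem_enum inE.
have mv : v \in s by rewrite mem_enum inE.
by rewrite -(nth_index u mu) e nth_index.
Qed.

Lemma cnt_notmiss F (j0 : 'I_F) (le : #|[set u : U m | validU u]| <= F) k :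
  #|[set j : 'I_F | ~~ miss (@validU m) (codeU j0) (missU (m:=m)) k j]| =
  F - #|[set u : U m | validU u && missU k u]|.
Proof.
have E : [set j : 'I_F | miss (@validU m) (codeU j0) (missU (m:=m)) k j] =
         codeU j0 @: [set u : U m | validU u && missU k u].
  apply/setP => j; rewrite !inE; apply/existsP/imsetP.
    by case=> u /and3P[vu /eqP <- mu]; exists u; rewrite // inE vu.
  by case=> u; rewrite inE => /andP[vu mu] ->; exists u; rewrite vu eqxx.
have C : #|[set j : 'I_F | miss (@validU m) (codeU j0) (missU (m:=m)) k j]| =
         #|[set u : U m | validU u && missU k u]|.
  rewrite E card_in_imset // => u v; rewrite !inE => /andP[vu _] /andP[vv _].
  exact: codeU_inj.
have H := cardsC [set j : 'I_F | miss (@validU m) (codeU j0) (missU (m:=m)) k j].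
rewrite card_ord C in H.
have -> : [set j : 'I_F | ~~ miss (@validU m) (codeU j0) (missU (m:=m)) k j] =
          ~: [set j : 'I_F | miss (@validU m) (codeU j0) (missU (m:=m)) k j].
  by apply/setP => j; rewrite !inE.
lia.
Qed.
End Final.

Local Open Scope ring_scope.

Theorem mainTheorem7 (m N : nat) (M : rat) :
  (3 <= m)%N -> (1 <= N)%N -> 0 < M -> M <= N%:R ->
  (3 * m)%N%:R * M / N%:R = (3 * m - 3)%N%:R ->
  achievable_with_subpack N (3 * m) M (N%:R / M - 1)
    (9 * m * (m - 1) * (2 * m - 1))%N.
Proof.
move=> m3 N1 M0 MN hM.
have [n mn] : exists n, m = n.+3 by exists (m - 3)%N; lia.
subst m.
have e1 : (3 * n.+3 - 3 = 3 * n + 6)%N by lia.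
rewrite e1 in hM.
have NZ : (N%:R : rat) != 0 by rewrite pnatr_eq0 -lt0n.
have KZ : ((3 * n.+3)%N%:R : rat) != 0 by rewrite pnatr_eq0.
have hM' : M = (3 * n + 6)%N%:R * N%:R / (3 * n.+3)%N%:R.
  rewrite -hM; field.
  by rewrite NZ andbT -natrD pnatr_eq0.
have e2 : (n.+3 - 1 = n.+2)%N by lia.
have e3 : (2 * n.+3 - 1 = 2 * n + 5)%N by lia.
set F := (9 * n.+3 * (n.+3 - 1) * (2 * n.+3 - 1))%N.
have F0 : (0 < F)%N by rewrite /F !muln_gt0; lia.
split => // b b1.
pose j0 : 'I_F := Ordinal F0.
have C3 : ('C(n.+3, 3) * 6 = n.+3 * n.+2 * n.+1)%N.
  by rewrite (_ : 6 = 3`!)%N // bin_ffact !ffactnS /= ffactn0 muln1 ?mulnA.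
have C2 : ('C(n.+2, 2) * 2 = n.+2 * n.+1)%N.
  by rewrite (_ : 2 = 2`!)%N // bin_ffact !ffactnS /= ffactn0 muln1 ?mulnA.
have le : (#|[set u : U n.+3 | validU u]| <= F)%N.
  rewrite cnt_valid.
  have -> : (4 * (27 * 'C(n.+3, 3)) = 18 * ('C(n.+3, 3) * 6))%N by ring.
  rewrite C3 /F e2 e3 e1; apply: eq_leq; ring.
have GS := generic_scheme b (@codeU_inj n.+3 F j0 le) (@Hsend n.+3) (@Hdeliv n.+3).
apply: GS => //.
- move=> k; rewrite cnt_notmiss // cnt_miss /=.
  have eX : (F - (3 * (2 * (3 * n.+3 - 3) + (3 * n.+3 - 3)) + 4 * (9 * 'C(n.+2, 2)))
            = 9 * n.+2 * n.+2 * (2 * n + 5))%N.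
    have -> : (4 * (9 * 'C(n.+2, 2)) = 18 * ('C(n.+2, 2) * 2))%N by ring.
    rewrite C2 /F e2 e3 e1.
    have -> : (9 * n.+3 * n.+2 * (2 * n + 5) = 9 * n.+2 * n.+2 * (2 * n + 5) +
       (3 * (2 * (3 * n + 6) + (3 * n + 6)) + 18 * (n.+2 * n.+1)))%N by ring.
    by rewrite addnK.
  rewrite eX hM' le_eqVlt; apply/orP; left; apply/eqP.
  rewrite /F e2 e3; field.
  have n0 : 0 <= (n%:R : rat) := ler0n _ _.
  by apply: lt0r_neq0; lra.
- rewrite (eq_bigr (fun _ => 3 + 2 * (3 * n.+3 - 3))%N); last by move=> k _; rewrite size_blist.
  rewrite sum_constT card_ord hM' /F e2 e3 e1; field.
  have n0 : 0 <= (n%:R : rat) := ler0n _ _.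
  by rewrite NZ /= !lt0r_neq0 //; lra.
Qed.
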